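(* Fix a rooted phylogenetic tree $T$ with root $\rho$, leaf set $[n]$, and edge set $E$. Let $\mathcal{G}_T=\{PD_{T,l}: l\in\mathbb{R}_{\ge 0}^E\}$ be the class of cooperative games on the player set $[n]$ induced by $T$ with non-negative edge lengths. This class is closed under addition, since $PD_{T,l_1}+PD_{T,l_2}=PD_{T,l_1+l_2}$. A value on $\mathcal{G}_T$ is a map $\psi$ assigning to each $\nu\in\mathcal{G}_T$ a function $\psi_\nu:[n]\to\mathbb{R}$. Consider the following axioms: 1. Efficiency: $\sum_{i\in[n]}\psi_\nu(i)=\nu([n])$. 2. Symmetry: if $i\ne j$ and $\nu(C\cup\{i\})=\nu(C\cup\{j\})$ for all $C\subseteq[n]\setminus\{i,j\}$, then $\psi_\nu(i)=\psi_\nu(j)$. 3. Dummy: if $\nu(C\cup\{i\})=\nu(C)$ for all $C\subseteq[n]\setminus\{i\}$, then $\psi_\nu(i)=0$. 4. Additivity: $\psi_{\nu_1+\nu_2}(i)=\psi_{\nu_1}(i)+\psi_{\nu_2}(i)$ for all $\nu_1,\nu_2\in\mathcal{G}_T$ and all $i$. Then there is exactly one value $\psi$ on $\mathcal{G}_T$ satisfying Axioms 1–4, and it is the Shapley value: $$\psi_\nu(i)=\frac{1}{n!}\sum_{S\subseteq[n]:\,i\in S}(|S|-1)!\,(n-|S|)!\,\big(\nu(S)-\nu(S\setminus\{i\})\big).$$ Equivalently, for $\nu=PD_{T,l}$, $\psi_\nu(i)=\sum_{e\in P(T;\rho,i)} l(e)/n(e)$ (the Fair Proportion index).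
   Context: A rooted phylogenetic tree on $[n]$ is a rooted tree with leaf set $[n]$ whose non-leaf vertices are unlabelled and have out-degree at least 2. For edge lengths $l\ge 0$ and $S\subseteq[n]$, the phylogenetic diversity $PD_{T,l}(S)$ is the sum of the lengths of the edges of the minimal subtree of $T$ containing $S\cup\{\rho\}$, with $PD_{T,l}(\emptyset)=0$. $n(e)$ is the number of leaves descended from edge $e$, and $P(T;\rho,i)$ is the path from $\rho$ to leaf $i$. *)

(* Defs.v *)
From HB Require Import structures.
From mathcomp Require Import all_boot all_order all_algebra.
Set Implicit Arguments. Unset Strict Implicit. Unset Printing Implicit Defensive.
Import Order.TTheory GRing.Theory Num.Theory.
Local Open Scope ring_scope.

(* A rooted tree on the finite vertex type V is given by a root [rho] and a
   parent map [par] (with [par rho = rho]); the edges are the pairs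
   (v, par v) for v != rho, so an edge is identified with its lower endpoint v.
   [anc v w] : w is an ancestor of v or w = v (iterate par from v to reach w). *)
Definition anc (V : finType) (par : V -> V) (v w : V) : bool :=
  connect (frel par) v w.

Definition children (V : finType) (rho : V) (par : V -> V) (v : V) : {set V} :=
  [set w | (w != rho) && (par w == v)].

Definition is_rooted_phylo (n : nat) (V : finType) (rho : V) (par : V -> V)
    (leaf : 'I_n -> V) : Prop :=
  [/\ par rho = rho,
      forall v, anc par v rho,
      injective leaf,
      forall v, v \in codom leaf -> children rho par v = set0
    & forall v, v \notin codom leaf -> 2 <= #|children rho par v|]%N.

Definition game (R : Type) (n : nat) := {ffun {set 'I_n} -> R}.

(* Phylogenetic diversity: the minimal subtree containing S and rho is the union
   of the root-to-leaf paths of the leaves in S, so edge v is in it iff v is an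
   ancestor-or-self of some leaf of S. *)
Definition PD (R : numDomainType) (n : nat) (V : finType) (rho : V) (par : V -> V)
    (leaf : 'I_n -> V) (l : V -> R) : game R n :=
  [ffun S : {set 'I_n} =>
     \sum_(v | (v != rho) && [exists i in S, anc par (leaf i) v]) l v].

Definition n_e (n : nat) (V : finType) (par : V -> V) (leaf : 'I_n -> V) (v : V)
  : nat := #|[set i | anc par (leaf i) v]|.

Definition FP (R : numFieldType) (n : nat) (V : finType) (rho : V) (par : V -> V)
    (leaf : 'I_n -> V) (l : V -> R) (i : 'I_n) : R :=
  \sum_(v | (v != rho) && anc par (leaf i) v) l v / (n_e par leaf v)%:R.

Definition shapley (R : numFieldType) (n : nat) (nu : game R n) (i : 'I_n) : R :=
  (n`!%:R)^-1 * \sum_(S : {set 'I_n} | i \in S)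
     ((#|S|.-1)`! * (n - #|S|)`!)%:R * (nu S - nu (S :\ i)).

Definition nonneg_len (R : numDomainType) (V : finType) (rho : V) (l : V -> R) :=
  forall v, v != rho -> 0 <= l v.

(* A value on G_T is modelled as a map psi on all games; only its restriction
   to G_T = { PD l | l >= 0 } matters. *)
Definition value_axioms (R : numFieldType) (n : nat) (V : finType) (rho : V)
    (par : V -> V) (leaf : 'I_n -> V) (psi : game R n -> 'I_n -> R) : Prop :=
  [/\
      forall l, nonneg_len rho l ->
        \sum_(i < n) psi (PD rho par leaf l) i = PD rho par leaf l setT,
      forall l, nonneg_len rho l -> forall i j : 'I_n, i != j ->
        (forall C : {set 'I_n}, i \notin C -> j \notin C ->
           PD rho par leaf l (i |: C) = PD rho par leaf l (j |: C)) ->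
        psi (PD rho par leaf l) i = psi (PD rho par leaf l) j,
      forall l, nonneg_len rho l -> forall i : 'I_n,
        (forall C : {set 'I_n}, i \notin C ->
           PD rho par leaf l (i |: C) = PD rho par leaf l C) ->
        psi (PD rho par leaf l) i = 0
    &
      forall l1 l2, nonneg_len rho l1 -> nonneg_len rho l2 -> forall i : 'I_n,
        psi [ffun S => PD rho par leaf l1 S + PD rho par leaf l2 S] i =
        psi (PD rho par leaf l1) i + psi (PD rho par leaf l2) i].

(* Main.v *)
Require Import Defs.
From HB Require Import structures.
From mathcomp Require Import all_boot all_order all_algebra.
From mathcomp Require Import ring lra.
Set Implicit Arguments. Unset Strict Implicit. Unset Printing Implicit Defensive.
Import Order.TTheory GRing.Theory Num.Theory.
Local Open Scope ring_scope.

Section Shap.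
Variables (R : realFieldType) (n : nat).
Implicit Types (nu : game R n).

Lemma shapley_dummy nu i :
  (forall C : {set 'I_n}, i \notin C -> nu (i |: C) = nu C) -> shapley nu i = 0.
Proof.
move=> H; rewrite /shapley big1 ?mulr0 // => S iS.
by have := H (S :\ i); rewrite setD1K // setD11 => ->; rewrite // subrr mulr0.
Qed.

Lemma shapley_add nu1 nu2 i :
  shapley [ffun S => nu1 S + nu2 S] i = shapley nu1 i + shapley nu2 i.
Proof.
rewrite /shapley -mulrDr -big_split /=; congr (_ * _); apply: eq_bigr => S _.
by rewrite !ffunE -mulrDr; congr (_ * _); rewrite addrACA opprD.
Qed.

Definition sw (i j x : 'I_n) := if x == i then j else if x == j then i else x.
Lemma swK i j : involutive (sw i j).
Proof.
move=> x; rewrite /sw; case: (eqVneq x i) => [->|xi]; first by rewrite eqxx; case: eqVneq.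
case: (eqVneq x j) => [->|xj]; first by rewrite eqxx.
by rewrite (negPf xi) (negPf xj).
Qed.
Definition fsw i j (S : {set 'I_n}) := [set x | sw i j x \in S].
Lemma fswK i j : involutive (fsw i j).
Proof. by move=> S; apply/setP=> x; rewrite !inE swK. Qed.

Lemma shapley_sym nu i j : i != j ->
  (forall C : {set 'I_n}, i \notin C -> j \notin C -> nu (i |: C) = nu (j |: C)) ->
  shapley nu i = shapley nu j.
Proof.
move=> ij H.
have swi : sw i j i = j by rewrite /sw eqxx.
have swj : sw i j j = i by rewrite /sw eqxx eq_sym (negPf ij).
have swo x : x != i -> x != j -> sw i j x = x.
  by move=> xi xj; rewrite /sw (negPf xi) (negPf xj).
have nuf S : nu (fsw i j S) = nu S.
  case iS: (i \in S); case jS: (j \in S).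
  - congr (nu _); apply/setP=> x; rewrite inE.
    case: (eqVneq x i) => [->|xi]; first by rewrite /sw eqxx iS jS.
    case: (eqVneq x j) => [->|xj]; first by rewrite /sw eqxx [j == i]eq_sym (negPf ij) iS jS.
    by rewrite /sw (negPf xi) (negPf xj).
  - have -> : fsw i j S = j |: (S :\ i).
      apply/setP=> x; rewrite !inE.
      case: (eqVneq x i) => [->|xi]; first by rewrite /sw eqxx jS (negPf ij).
      case: (eqVneq x j) => [->|xj]; first by rewrite /sw eqxx [j == i]eq_sym (negPf ij) iS.
      by rewrite /sw (negPf xi) (negPf xj).
    rewrite -H ?setD1K // ?inE ?eqxx // jS andbF //.
  - have -> : fsw i j S = i |: (S :\ j).
      apply/setP=> x; rewrite !inE.
      case: (eqVneq x i) => [->|xi]; first by rewrite /sw eqxx jS.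
      case: (eqVneq x j) => [->|xj]; first by rewrite /sw eqxx [j == i]eq_sym (negPf ij) iS.
      by rewrite /sw (negPf xi) (negPf xj).
    rewrite H ?setD1K // ?inE ?eqxx // ?iS ?andbF //.
  - congr (nu _); apply/setP=> x; rewrite inE.
    case: (eqVneq x i) => [->|xi]; first by rewrite /sw eqxx iS jS.
    case: (eqVneq x j) => [->|xj]; first by rewrite /sw eqxx [j == i]eq_sym (negPf ij) iS jS.
    by rewrite /sw (negPf xi) (negPf xj).
rewrite /shapley; congr (_ * _).
rewrite (reindex_inj (can_inj (fswK i j))) /=.
apply: eq_big => [T|T jT]; first by rewrite inE swi.
have cT : #|fsw i j T| = #|T|.
  by rewrite /fsw -[[set x | _]]/(sw i j @^-1: T) card_preimset //; apply: can_inj (swK i j).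
have -> : fsw i j T :\ i = fsw i j (T :\ j).
  apply/setP=> x; rewrite !inE; congr (_ && _).
  case: (eqVneq x i) => [->|xi]; first by rewrite /sw eqxx eqxx.
  apply/esym/negP => /eqP e; move: xi; rewrite -(swK i j x) e.
  by rewrite /sw eqxx [j == i]eq_sym (negPf ij) eqxx.
by rewrite cT !nuf.
Qed.
Lemma coef_nat (t : nat) : (t <= n)%N -> (0 < n)%N ->
  (t * ((t.-1)`! * (n - t)`!) + (t == 0%N) * n`! =
   (n - t) * ((t.+1.-1)`! * (n - t.+1)`!) + (t == n) * n`!)%N.
Proof.
move=> tn n0.
case: t tn => [|k] tn.
  rewrite mul0n add0n subn0 /= fact0 mul1n.
  case: n n0 {tn} => // m _; rewrite factS subn1 /= mul1n mul0n addn0.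
  done.
have [->|kn] := eqVneq k.+1 n.
  case: n n0 tn => // m _ _; rewrite subnn /= fact0 muln1 mul0n add0n mul1n addn0 factS.
  done.
have : (k.+1 < n)%N by rewrite ltn_neqAle kn tn.
rewrite -subn_gt0; case E: (n - k.+1)%N => [|m] // _.
rewrite subnS E /= !mul0n !addn0 !factS; ring.

Qed.

Lemma shapley_eff nu : \sum_(i < n) shapley nu i = nu setT - nu set0.
Proof.
have [n0|npos] := posnP n.
  have eT : [set: 'I_n] = set0 by apply/setP => -[x]; rewrite n0.
  by rewrite eT subrr big1 // => -[x hx]; exfalso; rewrite n0 in hx.
pose F k := ((k.-1)`! * (n - k)`!)%:R : R.
rewrite /shapley -mulr_sumr.
have e1 (i : 'I_n) : \sum_(S : {set 'I_n} | i \in S) ((#|S|.-1)`! * (n - #|S|)`!)%:R * (nu S - nu (S :\ i))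
   = \sum_(S : {set 'I_n} | i \in S) F #|S| * nu S - \sum_(T : {set 'I_n} | i \notin T) F #|T|.+1 * nu T.
  rewrite (eq_bigr (fun S : {set 'I_n} => F #|S| * nu S - F #|S| * nu (S :\ i))); last first.
    by move=> S _; rewrite mulrBr.
  rewrite sumrB; congr (_ - _).
  rewrite (reindex_onto (fun T => i |: T) (fun S => S :\ i)) /=; last first.
    by move=> S iS; rewrite setD1K.
  apply: eq_big => [T|T /andP[_ /eqP e]].
    rewrite setU11 /=; case: (boolP (i \in T)) => iT.
      apply/negbTE/eqP => e; have : i \in (i |: T) :\ i by rewrite e.
      by rewrite !inE eqxx.
    by rewrite setU1K ?eqxx.
  have iT : i \notin T by rewrite -e !inE eqxx.
  by rewrite e cardsU1 iT.
under eq_bigr do rewrite e1.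
rewrite sumrB.
have e3 (G : {set 'I_n} -> R) (b : bool) :
    \sum_(i < n) \sum_(S : {set 'I_n} | (i \in S) == b) G S
    = \sum_(S : {set 'I_n}) (if b then #|S| else (n - #|S|)%N)%:R * G S.
  under eq_bigr do rewrite big_mkcond /=.
  rewrite exchange_big /=; apply: eq_bigr => S _.
  rewrite -big_mkcond /= sumr_const mulr_natl; congr (_ *+ _).
  case: b.
    by apply: eq_card => x; rewrite [in LHS]unfold_in /= addbT negbK.
  transitivity (#|'I_n| - #|S|)%N; last by rewrite card_ord.
  rewrite -(cardC (mem S)) addKn; apply: eq_card => x.
  by rewrite [in LHS]unfold_in /= addbF !inE.
have e3t (G : {set 'I_n} -> R) : \sum_(i < n) \sum_(S : {set 'I_n} | i \in S) G S
    = \sum_(S : {set 'I_n}) #|S|%:R * G S.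
  rewrite -(e3 G true); apply: eq_bigr => i _; apply: eq_bigl => S; by rewrite eqb_id.
have e3f (G : {set 'I_n} -> R) : \sum_(i < n) \sum_(S : {set 'I_n} | i \notin S) G S
    = \sum_(S : {set 'I_n}) (n - #|S|)%:R * G S.
  rewrite -(e3 G false); apply: eq_bigr => i _; apply: eq_bigl => S; by rewrite eqbF_neg.
rewrite e3t e3f -sumrB.
pose c := (n`!)%:R : R.
rewrite (eq_bigr (fun S : {set 'I_n} =>
   ((if S == setT then c else 0) - (if S == set0 then c else 0)) * nu S)); last first.
  move=> S _; rewrite !mulrA -mulrBl; congr (_ * _).
  have tn : (#|S| <= n)%N by have := max_card (mem S); rewrite card_ord.
  have H := coef_nat tn npos.
  have /(congr1 (fun k : nat => k%:R : R)) := H.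
  rewrite !natrD /F -!natrM.
  have -> : (S == setT) = (#|S| == n).
    by rewrite eqEcard subsetT cardsT card_ord eqn_leq tn.
  rewrite -cards_eq0.
  case: (#|S| == n); case: (#|S| == 0%N); rewrite /c ?mul1n ?mul0n; lra.
rewrite (eq_bigr (fun S : {set 'I_n} =>
   (if S == setT then c * nu S else 0) - (if S == set0 then c * nu S else 0))); last first.
  by move=> S _; rewrite mulrBl; case: (S == setT); case: (S == set0); rewrite ?mul0r.
rewrite sumrB -!big_mkcond /= !big_pred1_eq -mulrBr mulKf //.
by rewrite pnatr_eq0 -lt0n fact_gt0.
Qed.
End Shap.

Section Tree.
Variables (R : realFieldType) (n : nat) (V : finType) (rho : V) (par : V -> V)
  (leaf : 'I_n -> V).
Local Notation PDl := (@PD R n V rho par leaf).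

Lemma PD_ext (l1 l2 : V -> R) : l1 =1 l2 -> PDl l1 = PDl l2.
Proof. by move=> e; apply/ffunP=> S; rewrite !ffunE; apply: eq_bigr => v _; exact: e. Qed.

Lemma PD_add (l1 l2 : V -> R) :
  PDl (fun v => l1 v + l2 v) = [ffun S => PDl l1 S + PDl l2 S].
Proof. by apply/ffunP=> S; rewrite !ffunE big_split. Qed.

Lemma PD_set0 (l : V -> R) : PDl l set0 = 0.
Proof.
rewrite ffunE big1 // => v /andP[_ /existsP[i]]; by rewrite inE.
Qed.

Definition lseq (l : V -> R) (s : seq V) v := if v \in s then l v else 0.

Lemma PD_single (l : V -> R) v S : PDl (lseq l [:: v]) S =
  if (v != rho) && [exists k in S, anc par (leaf k) v] then l v else 0.
Proof.
rewrite ffunE; case: ifP => P.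
  rewrite (bigD1 v) //= big1 ?addr0 /lseq ?mem_seq1 ?eqxx // => w /andP[_ wv].
  by rewrite mem_seq1 (negPf wv).
apply: big1 => w Pw; rewrite /lseq mem_seq1; case: eqP => // e.
by move: P; rewrite -e Pw.
Qed.

Lemma uniq_value (psi : game R n -> 'I_n -> R) :
  value_axioms rho par leaf psi -> forall l, nonneg_len rho l -> forall i,
  psi (PDl l) i = FP rho par leaf l i.
Proof.
case=> Heff Hsym Hdum Hadd l l0 i.
have nn s : nonneg_len rho (lseq l s).
  by move=> v vr; rewrite /lseq; case: ifP => // _; exact: l0.
have step s : uniq s -> psi (PDl (lseq l s)) i = \sum_(v <- s) psi (PDl (lseq l [:: v])) i.
  elim: s => [|v s IH] /=.
    move=> _; rewrite big_nil; apply: Hdum => // C _.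
    by rewrite !ffunE !big1 // => w _; rewrite /lseq in_nil.
  case/andP => vs us; rewrite big_cons -IH // -Hadd ?nn //; congr (psi _ i).
  rewrite -PD_add; apply: PD_ext => w; rewrite /lseq in_cons mem_seq1.
  by case: eqVneq => [->|wv] /=; [rewrite (negPf vs) addr0 | rewrite add0r].
have -> : PDl l = PDl (lseq l (enum V)) by apply: PD_ext => w; rewrite /lseq mem_enum.
have ex v x C : anc par (leaf x) v -> [exists k in x |: C, anc par (leaf k) v].
  by move=> ax; apply/existsP; exists x; rewrite setU11 ax.
have single v : psi (PDl (lseq l [:: v])) i =
    if (v != rho) && anc par (leaf i) v then l v / (n_e par leaf v)%:R else 0.
  set g := PDl (lseq l [:: v]).
  have gE S : g S = if (v != rho) && [exists k in S, anc par (leaf k) v] then l v else 0.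
    exact: PD_single.
  case: (boolP ((v != rho) && anc par (leaf i) v)) => [/andP[vr ai] | nP].
    set A := [set k | anc par (leaf k) v].
    have dA j : j \notin A -> psi g j = 0.
      move=> jA; apply: Hdum => // C jC; rewrite !gE; congr (if _ then _ else _).
      congr (_ && _); apply/existsP/existsP => [[k /andP[kjC ak]] | [k /andP[kC ak]]].
        move: kjC; rewrite !inE => /orP[/eqP ek|kC]; first by move: jA; rewrite inE -ek ak.
        by exists k; rewrite kC ak.
      by exists k; rewrite inE kC orbT ak.
    have sA j : j \in A -> psi g j = psi g i.
      move=> jA; case: (eqVneq i j) => [->//|ij]; symmetry.
      apply: Hsym => // C _ _; rewrite !gE vr !ex //.
      by move: jA; rewrite inE.
    have eff := Heff _ (nn [:: v]); rewrite -/g in eff.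
    have : g setT = l v.
      rewrite gE vr /=.
      have -> : [exists k in [set: 'I_n], anc par (leaf k) v] by apply/existsP; exists i; rewrite in_setT ai.
      by [].
    move=> gT; rewrite gT (bigID (mem A)) /= [X in _ + X]big1 ?addr0 in eff; last first.
      by move=> j /dA.
    rewrite (eq_bigr (fun _ => psi g i)) in eff; last by move=> j /sA.
    rewrite sumr_const in eff.
    have nA : n_e par leaf v = #|A| by [].
    rewrite nA -eff -(mulr_natr (psi g i)) mulfK // pnatr_eq0 -lt0n card_gt0.
    by apply/set0Pn; exists i; rewrite inE.
  apply: Hdum => // C iC; rewrite !gE.
  case vr: (v != rho) => //=; rewrite vr /= in nP.
  congr (if _ then _ else _).
  apply/existsP/existsP => [[k /andP[kjC ak]] | [k /andP[kC ak]]].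
    move: kjC; rewrite !inE => /orP[/eqP ek|kC]; first by move: nP; rewrite -ek ak.
    by exists k; rewrite kC ak.
  by exists k; rewrite inE kC orbT ak.
rewrite step ?enum_uniq // big_enum /= /FP [RHS]big_mkcond /=.
by apply: eq_bigr => v _; rewrite single.
Qed.
End Tree.

Unset Implicit Arguments.
Theorem theorem7 (R : realFieldType) (n : nat) (V : finType) (rho : V)
    (par : V -> V) (leaf : 'I_n -> V) :
  is_rooted_phylo rho par leaf ->
  (forall psi : game R n -> 'I_n -> R,
     value_axioms rho par leaf psi <->
     (forall l : V -> R, nonneg_len rho l -> forall i : 'I_n,
        psi (PD rho par leaf l) i = shapley (PD rho par leaf l) i))
  /\
  (forall l : V -> R, nonneg_len rho l -> forall i : 'I_n,
     shapley (PD rho par leaf l) i = FP rho par leaf l i).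
Proof.
move=> _.
have Hsh : value_axioms rho par leaf (@shapley R n).
  split.
  - by move=> l _; rewrite shapley_eff PD_set0 subr0.
  - by move=> l _ i j ij H; exact: shapley_sym.
  - by move=> l _ i H; exact: shapley_dummy.
  - by move=> l1 l2 _ _ i; exact: shapley_add.
have SF := uniq_value Hsh.
split => // psi; split.
  by move=> Hp l l0 i; rewrite (uniq_value Hp) // SF.
move=> Hp; case: Hsh => e s d a; split.
- by move=> l l0; rewrite (eq_bigr _ (fun i _ => Hp l l0 i)); exact: e.
- by move=> l l0 i j ij H; rewrite !Hp //; exact: s.
- by move=> l l0 i H; rewrite Hp //; exact: d.
- move=> l1 l2 h1 h2 i.
  have h12 : nonneg_len rho (fun v => l1 v + l2 v).
    by move=> v vr; rewrite addr_ge0 ?h1 ?h2.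
  by rewrite -PD_add Hp // PD_add a // (Hp l1) // (Hp l2).
Qed.
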